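(* Let $\epsilon\in(0,1)$ and let $r=r(n)$ be any function with $r=o(\sqrt{\log n})$. Then for every $n$ there is a finite collection of linear equations $C_1,\dots,C_m$ over the dihedral group $\mathbf{D}_3$ on the variables $x_1,\dots,x_n$ such that every $(1\pm\epsilon)$ code sparsifier of $C_1,\dots,C_m$ has size at least $n^{r-o(1)}$. In particular (taking $r\to\infty$ slowly), there are such collections over a group of constant size for which every $(1\pm\epsilon)$ code sparsifier has size $n^{\omega(1)}=\log^{\omega(1)}(|\mathbf{D}_3^n|)$.
   Context: $\mathbf{D}_3$ is the dihedral group of order 6 (non-abelian). For a group $G$, a linear equation over $G$ on variables $x_1,\dots,x_n\in\{0,1\}$ is a map $C:\{0,1\}^n\to G$ of the form $C(x)=a_1^{x_1}a_2^{x_2}\cdots a_n^{x_n}$ with $a_1,\dots,a_n\in G$ (the product taken in this order, $a^0=1$). Given linear equations $C_1,\dots,C_m$, a $(1\pm\epsilon)$ code sparsifier is a subset $S\subseteq[m]$ with weights $w_i>0$ ($i\in S$) such that for every $x\in\{0,1\}^n$, $(1-\epsilon)\sum_{i\in[m]}\mathbf 1[C_i(x)\ne1]\le\sum_{i\in S}w_i\mathbf 1[C_i(x)\ne1]\le(1+\epsilon)\sum_{i\in[m]}\mathbf 1[C_i(x)\ne1]$; its size is $|S|$. *)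

(* Defs.v *)
From HB Require Import structures.
From mathcomp Require Import all_boot all_order all_algebra all_fingroup.
From mathcomp Require Import extremal.
From mathcomp Require Import all_classical all_reals all_analysis.
Set Implicit Arguments. Unset Strict Implicit. Unset Printing Implicit Defensive.
Import Order.TTheory GRing.Theory Num.Theory.

(* D3 = the dihedral group of order 6, MathComp's 'D_6 (extremal.v). *)
Definition D3 : finGroupType := dihedral_gtype 6.

Definition lin_eq (n : nat) (a : 'I_n -> D3) (x : 'I_n -> bool) : D3 :=
  (\prod_(j < n) (if x j then a j else 1))%g.

Definition nviol (n m : nat) (C : 'I_m -> 'I_n -> D3) (x : 'I_n -> bool) : nat :=
  #|[set i : 'I_m | lin_eq (C i) x != 1%g]|.

Definition is_code_sparsifier (R : realType) (n m : nat)
    (C : 'I_m -> 'I_n -> D3) (eps : R) (S : {set 'I_m}) (w : 'I_m -> R) : Prop :=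
  (forall i, i \in S -> (0 < w i)%R) /\
  forall x : 'I_n -> bool,
    ((1 - eps) * (nviol C x)%:R <=
       \sum_(i in S) w i * (lin_eq (C i) x != 1%g)%:R)%R /\
    (\sum_(i in S) w i * (lin_eq (C i) x != 1%g)%:R <=
       (1 + eps) * (nviol C x)%:R)%R.

(* Main.v *)
Require Import Defs.
From HB Require Import structures.
From mathcomp Require Import all_boot all_order all_algebra all_fingroup.
From mathcomp Require Import extremal.
From mathcomp Require Import all_classical all_reals all_analysis.
Import Order.TTheory GRing.Theory Num.Theory.
Import numFieldNormedType.Exports.
From mathcomp Require Import all_solvable.
From mathcomp Require Import ring lra zify.
Set Implicit Arguments. Unset Strict Implicit. Unset Printing Implicit Defensive.

Section GroupPart.
Local Open Scope group_scope.
Lemma D3_gens : exists (rho s : D3), [/\ rho ^+ 3 = 1, rho != 1, s ^+ 2 = 1 & rho ^ s = rho^-1].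
Proof.
have := isoGrp_hom (@Grp_dihedral 3 isT).
case/existsP=> -[x y] /= /eqP[defG x3 y2 xy].
exists x, y; split=> //.
apply/eqP=> x1.
have := @card_dihedral 3 isT.
rewrite -defG x1 cycle1 joing1G.

move=> h.
have : #|<[y]>| <= 2.
  rewrite -orderE; apply: dvdn_leq => //; by rewrite order_dvdn y2.
by rewrite h.
Qed.

Definition ev (y : nat -> bool) (p : seq (nat * D3)) : D3 :=
  \prod_(q <- p) (if y q.1 then q.2 else 1).
Definition pinv (p : seq (nat * D3)) := rev (map (fun q => (q.1, q.2^-1)) p).
Fixpoint Prog (rho s : D3) (k : nat) : seq (nat * D3) :=
  match k with
  | 0 => [:: (0%N, rho)]
  | k'.+1 => Prog rho s k' ++ (k, s) :: pinv (Prog rho s k') ++ [:: (k, s)]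
  end.

Lemma ev_cat y p1 p2 : ev y (p1 ++ p2) = ev y p1 * ev y p2.
Proof. by rewrite /ev big_cat. Qed.

Lemma ev_cons y q p : ev y (q :: p) = (if y q.1 then q.2 else 1) * ev y p.
Proof. by rewrite /ev big_cons. Qed.

Lemma ev_nil y : ev y [::] = 1.
Proof. by rewrite /ev big_nil. Qed.

Lemma ev_inv y p : ev y (pinv p) = (ev y p)^-1.
Proof.
elim: p => [|q p IH]; first by rewrite /pinv /= ev_nil invg1.
rewrite /pinv map_cons rev_cons -cats1 ev_cat -/(pinv p) IH ev_cons ev_cons ev_nil.
by rewrite invMg mulg1 /=; case: (y q.1); rewrite ?invg1.
Qed.

Lemma size_Prog rho s k : (size (Prog rho s k) <= 2 ^ k.+2)%N.
Proof.
suff: (size (Prog rho s k) + 2 <= 3 * 2 ^ k)%N.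
  by move=> h; rewrite expnS expnS; apply: leq_trans (leq_addr _ _) (leq_trans h _); rewrite mulnA leq_mul2r; apply/orP; right.
elim: k => [|k IH] //=.
rewrite size_cat /= size_cat /pinv size_rev size_map /= expnS.
rewrite mulnCA mul2n -addnn; lia.
Qed.

Lemma ev_Prog (rho s : D3) y k :
  rho ^+ 3 = 1 -> s ^+ 2 = 1 -> rho ^ s = rho^-1 ->
  if all y (iota 0 k.+1) then exists e, ev y (Prog rho s k) = rho ^+ e /\ ~~ (3 %| e)%N
  else ev y (Prog rho s k) = 1.
Proof.
move=> r3 s2 rs.
elim: k => [|k IH].
  rewrite /= andbT ev_cons ev_nil mulg1; case: (y 0%N) => //.
  by exists 1%N.
rewrite -addn1 iotaD all_cat add0n.
set A := all y (iota 0 k.+1) in IH *.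
rewrite /= andbT ev_cat ev_cons ev_cat ev_inv ev_cons ev_nil mulg1 /=.
case: (y k.+1); last by rewrite andbF mulg1 mul1g mulgV.
rewrite andbT.
case: A IH.
  case=> e [-> he]; exists (e * 2)%N; split; last first.
    by rewrite Euclid_dvdM // negb_or he.
  have sV : s^-1 = s by apply/eqP; rewrite eq_invg_mul -[s * s]/(s ^+ 2) s2.
  have : (rho ^+ e)^-1 ^ s = rho ^+ e.
    by rewrite conjVg conjXg rs expVgn invgK.
  rewrite /conjg sV => h.
  by rewrite expgM expgS expg1 -?mulgA h.
by move->; rewrite mul1g invg1 mul1g -[s * s]/(s ^+ 2) s2.
Qed.

Section Layout.
Variable gT : finGroupType.

Lemma prod_single (N a : nat) (c : bool) (G : gT) : (a < N)%N ->
  \prod_(0 <= i < N) (if (i == a) && c then G else 1) = if c then G else 1.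
Proof.
move=> aN; case: c.
  under eq_bigr do rewrite andbT.
  by rewrite -big_mkcond big_nat1_eq /= aN.
by rewrite big1 // => i _; rewrite andbF.
Qed.

Lemma layout (N L : nat) (t u : nat -> nat) (G : nat -> gT) :
  (forall l, t l < N)%N ->
  \prod_(0 <= j < L * N) (if (j %% N == t (j %/ N)) && (j %% N == u (j %/ N)) then G (j %/ N) else 1)
  = \prod_(0 <= l < L) (if t l == u l then G l else 1).
Proof.
move=> tN.
have N0 : (0 < N)%N by have := tN 0%N; case: N {tN}.
elim: L => [|L IH]; first by rewrite mul0n !big_geq.
rewrite big_nat_recr //= mulSnr (@big_cat_nat _ _ _ (L * N)%N 0%N) //=; last exact: leq_addr.
rewrite IH; congr (_ * _).
rewrite -{1}(add0n (L * N)%N) big_addn addKn.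
rewrite -(prod_single _ (G L) (tN L)).
apply: eq_big_nat => i /andP[_ iN].
rewrite (addnC i) modnMDl divnMDl // divn_small // modn_small // addn0.
by case: eqP => [->|].
Qed.
End Layout.

Lemma rho_pow_eq1 (rho : D3) e : rho ^+ 3 = 1 -> rho != 1 -> (rho ^+ e == 1) = (3 %| e)%N.
Proof.
move=> r3 r1; rewrite -order_dvdn.
have : (#[rho] %| 3)%N by rewrite order_dvdn r3.
case/primeP: (isT : prime 3) => _ /[apply] /orP[] /eqP o.
  by move: r1; rewrite -order_eq1 o.
by rewrite o.
Qed.

Section Construction.
Variables (rho s : D3) (k N : nat).
Local Notation p := (Prog rho s k).
Local Notation L := (size (Prog rho s k)).

Definition tf (tau : {ffun 'I_k.+1 -> 'I_N}) (j : nat) : nat := tau (inord j).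
Definition aeq tau (j : nat) : D3 :=
  if (j < L * N)%N then
    (if j %% N == tf tau (nth (0%N, 1) p (j %/ N)).1 then (nth (0%N, 1) p (j %/ N)).2 else 1)
  else 1.
Definition wit sig (j : nat) : bool :=
  (j < L * N)%N && (j %% N == tf sig (nth (0%N, 1) p (j %/ N)).1).

Lemma lin_eq_layout n sig tau : (L * N <= n)%N ->
  lin_eq (fun j : 'I_n => aeq tau j) (fun j => wit sig j) = ev (fun j => tf sig j == tf tau j) p.
Proof.
move=> LNn; rewrite /lin_eq.
rewrite -(big_mkord xpredT (fun j => if wit sig j then aeq tau j else 1)).
rewrite (@big_cat_nat _ _ _ (L * N)%N 0%N) //=.
have -> : \prod_((L * N)%N <= i < n) (if wit sig i then aeq tau i else 1) = 1.
  rewrite big_nat_cond big1 // => i /andP[/andP[h _] _].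
  by rewrite /wit ltnNge h.
rewrite mulg1.
rewrite /ev (big_nth (0%N, 1)).
rewrite -(@layout _ N L (fun l => tf sig (nth (0%N, 1) p l).1) (fun l => tf tau (nth (0%N, 1) p l).1) (fun l => (nth (0%N, 1) p l).2)); last by move=> l; rewrite /tf ltn_ord.
apply: eq_big_nat => j /andP[_ jLN].
rewrite /wit /aeq jLN /=.
by case: (_ == _); case: (_ == _).
Qed.

Lemma lin_eq_iso (n : nat) sig tau : rho ^+ 3 = 1 -> rho != 1 -> s ^+ 2 = 1 -> rho ^ s = rho^-1 ->
  (L * N <= n)%N ->
  (lin_eq (fun j : 'I_n => aeq tau j) (fun j => wit sig j) != 1) = (sig == tau).
Proof.
move=> r3 r1 s2 rs LNn; rewrite lin_eq_layout //.
have := ev_Prog (fun j => tf sig j == tf tau j) k r3 s2 rs.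
have -> : all (fun j => tf sig j == tf tau j) (iota 0 k.+1) = (sig == tau).
  apply/allP/eqP => [h | ->]; last by [].
  apply/ffunP => i; apply/val_inj/eqP.
  have := h i; rewrite mem_iota /= add0n ltn_ord /tf inord_val; exact.
case: (sig == tau).
  by case=> e [-> he]; rewrite rho_pow_eq1 // he.
by move->; rewrite eqxx.
Qed.
End Construction.

End GroupPart.

Local Open Scope classical_set_scope.
Local Open Scope ring_scope.

Lemma all_in_S (R : realType) n m (C : 'I_m -> 'I_n -> D3) (eps : R) S w :
  eps < 1 -> (forall i, exists x, forall j, (lin_eq (C j) x != 1%g) = (j == i)) ->
  is_code_sparsifier C eps S w -> #|S| = m.
Proof.
move=> e1 wit [wpos sp].
suff -> : S = [set: 'I_m]%SET by rewrite cardsT card_ord.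
apply/setP => i; rewrite inE; apply/negPn/negP => iS.
have [x hx] := wit i.
have [h _] := sp x.
have hv : nviol C x = 1%N.
  rewrite /nviol (_ : [set j | lin_eq (C j) x != 1%g]%SET = [set i]%SET) ?cards1 //.
  by apply/setP => j; rewrite !inE hx.
move: h; rewrite hv big1 ?mulr1.
  by rewrite subr_le0 leNgt e1.
move=> j jS; rewrite hx; case: eqP => [eji|]; last by rewrite mulr0.
by move: iS; rewrite -eji jS.
Qed.

Section Real.
Variable R : realType.

Lemma fact_pow (n M : nat) (x : R) : (2 <= n)%N -> (0 < M)%N ->
  x <= ln (M%:R : R) / ln (n%:R : R) -> (n%:R : R) `^ x <= M%:R.
Proof.
move=> n2 M0 hx.
have lpos : 0 < ln (n%:R : R) by apply: ln_gt0; rewrite ltr1n.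
rewrite /powR ifN; last by rewrite pnatr_eq0 -lt0n (leq_trans _ n2).
have M0' : (0 : R) < M%:R by rewrite ltr0n.
rewrite -[X in _ <= X](@lnK _ M%:R) ?posrE // ler_expR.
by rewrite -ler_pdivlMr.
Qed.


Lemma ln2_le1 : ln (2 : R) <= 1.
Proof. by have := @le_ln1Dx R 1 ltac:(lra); rewrite (_ : 1 + 1 = 2). Qed.

Lemma two_pow_le_exp (j : nat) : ((2 ^ j)%:R : R) <= expR j%:R.
Proof.
rewrite natrX -[X in _ <= expR X]mulr1 expRM_natl.
apply: lerXn2r; rewrite ?nnegrE ?ler0n ?expR_ge0 //.
by have := @expR_ge1Dx R 1; rewrite (_ : 1 + 1 = 2).
Qed.

Lemma truncn_le_abs (rr : R) : ((Num.truncn rr)%:R : R) <= `|rr|.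
Proof.
case: (leP 0 rr) => r0.
  by rewrite ger0_norm // truncn_le.
have -> : Num.truncn rr = 0%N by rewrite truncn_floor leNgt r0.
by rewrite normr_ge0.
Qed.

Lemma big_enough (n : nat) (rr : R) : (2 <= n)%N -> 9 <= ln (n%:R : R) ->
  `|rr| <= Num.sqrt (ln (n%:R : R)) -> (2 * 2 ^ (Num.truncn rr).+2 <= n)%N.
Proof.
move=> n2 l9 hr.
set k := Num.truncn rr.
have hk := truncn_le_abs rr; rewrite -/k in hk.
set l := ln (n%:R : R) in l9 hr.
have q0 : 0 <= Num.sqrt l := sqrtr_ge0 l.
have ql : Num.sqrt l ^+ 2 = l by rewrite sqr_sqrtr //; lra.
have hk3 : (k.+3)%:R <= l.
  have e3 : ((k.+3)%:R : R) = k%:R + 3 by rewrite -addn3 natrD.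
  rewrite e3; move: (Num.sqrt l) q0 ql hr => q q0 ql hr.
  have : q * q = l by rewrite -expr2.
  nra.
have n0 : (0 : R) < n%:R by rewrite ltr0n (leq_trans _ n2).
rewrite -(ler_nat R) -expnS.
apply: (le_trans (two_pow_le_exp _)).
by rewrite -[X in _ <= X](@lnK _ n%:R) ?posrE // ler_expR.
Qed.

Lemma ln_ev (c : R) : \forall n \near \oo, c <= ln (n%:R : R).
Proof.
apply: filterS (nbhs_infty_ger (expR c)) => n h.
by rewrite -(expRK c) ler_ln ?posrE ?expR_gt0 // (lt_le_trans (expR_gt0 c) h).
Qed.

Lemma delta_bound (n k N : nat) (rr : R) : (2 <= n)%N -> k = Num.truncn rr ->
  (2 * 2 ^ k.+2 <= n)%N -> N = (n %/ 2 ^ k.+2)%N ->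
  rr - ln (((N ^ k.+1)%N)%:R : R) / ln (n%:R : R) <= (2 * rr ^+ 2 + 18) / ln (n%:R : R).
Proof.
move=> n2 hk hD hN.
set D := (2 ^ k.+2)%N in hD hN.
have D0 : (0 < D)%N by rewrite expn_gt0.
have hDdef : D = (2 ^ k.+2)%N by [].
clearbody D.
have N1 : (1 <= N)%N by rewrite hN divn_gt0 //; lia.
have hn : (n <= 2 * D * N)%N.
  have := divn_eq n D; have := ltn_pmod n D0; have : (D <= N * D)%N by rewrite leq_pmull.
  rewrite -hN; lia.
have lpos : 0 < ln (n%:R : R) by apply: ln_gt0; rewrite ltr1n.
have N0 : (0 : R) < N%:R by rewrite ltr0n.
have lnN : ln (n%:R : R) - (k.+3)%:R <= ln (N%:R : R).
  have h1 : ln (n%:R : R) <= ln ((2 * D)%N%:R : R) + ln (N%:R : R).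
    have hh : (0:R) < (2 * D)%N%:R by rewrite ltr0n muln_gt0 D0.
    have n0 : (0 < n)%N by lia.
    have h3 : (0 < 2 * D * N)%N by rewrite !muln_gt0 D0 N1.
    by rewrite -lnM ?posrE // -natrM ler_ln ?posrE ?ltr0n ?ler_nat.
  have h2 : ln ((2 * D)%N%:R : R) <= (k.+3)%:R.
    rewrite hDdef -expnS natrX lnXn ?ltr0n //.
    by rewrite lerMn2r ln2_le1 orbT.
  lra.
have lnM' : ln (((N ^ k.+1)%N)%:R : R) = (k.+1)%:R * ln (N%:R : R).
  by rewrite natrX lnXn // mulr_natl.
have hK : rr < (k.+1)%:R by rewrite hk real_truncnS_gt ?num_real.
have e1 : ((k.+1)%:R : R) = k%:R + 1 by rewrite -natr1.
have e3 : ((k.+3)%:R : R) = k%:R + 3 by rewrite -addn3 natrD.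
have x0 : (0 : R) <= k%:R by rewrite ler0n.
move: hK lnN lnM'; rewrite e1 e3 => hK lnN lnM'.
have hK2 : ((k%:R + 1) * (k%:R + 3) : R) <= 2 * rr ^+ 2 + 18.
  case: (leP 0 rr) => r0.
    have : (k%:R : R) <= rr by rewrite hk truncn_le.
    move: (k%:R : R) x0 => x x0 xr.
    have h1 : (x + 1) * (x + 3) <= (rr + 1) * (rr + 3).
      by apply: ler_pM; lra.
    have h2 : (rr + 1) * (rr + 3) <= 2 * rr ^+ 2 + 18.
      have : 0 <= (rr - 2) ^+ 2 by apply: sqr_ge0.
      rewrite !expr2; lra.
    lra.
  have -> : k = 0%N by rewrite hk truncn_floor leNgt r0.
  have : 0 <= rr ^+ 2 by apply: sqr_ge0.
  rewrite mulr0n; lra.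
set l := ln (n%:R : R) in lpos lnN lnM' *.
set lN := ln (N%:R : R) in lnN lnM' *.
move: (k%:R : R) x0 hK lnN lnM' hK2 => x x0 hK lnN lnM' hK2.
have key : rr * l - (x + 1) * lN <= 2 * rr ^+ 2 + 18.
  have a1 : (x + 1) * (l - (x + 3)) <= (x + 1) * lN by apply: ler_wpM2l; lra.
  have a2 : rr * l <= (x + 1) * l by apply: ler_wpM2r; lra.
  lra.
rewrite lnM'.
have -> : rr - (x + 1) * lN / l = (rr * l - (x + 1) * lN) / l.
  by field; rewrite gt_eqF.
by rewrite ler_wpM2r // invr_ge0 ltW.
Qed.


End Real.

Lemma abs_from (R : realType) (rr q a : R) : 0 < q -> `|rr / q| <= a -> `|rr| <= a * q.
Proof.
move=> q0; rewrite normrM normfV (gtr0_norm q0).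
by rewrite ler_pdivrMr.
Qed.

Theorem mainTheorem3 (R : realType) (eps : R) (r : nat -> R) :
  0 < eps < 1 ->
  (fun n : nat => r n / Num.sqrt (ln (n%:R : R))) @ \oo --> (0 : R) ->
  exists delta : nat -> R,
    delta @ \oo --> (0 : R) /\
    \forall n \near \oo,
      exists (m : nat) (C : 'I_m -> 'I_n -> D3),
        forall (S : {set 'I_m}) (w : 'I_m -> R),
          is_code_sparsifier C eps S w ->
          (n%:R : R) `^ (r n - delta n) <= (#|S|)%:R.
Proof.
move=> /andP[e0 e1] H.
have [rho [s [r3 r1 s2 rs]]] := D3_gens.
pose k n := Num.truncn (r n).
pose N n := (n %/ 2 ^ (k n).+2)%N.
have Hsq : forall a : R, 0 < a ->
    \forall n \near \oo, `|r n / Num.sqrt (ln (n%:R : R))| <= a.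
  by move=> a a0; apply: ((cvgr0Pnorm_le _).1 H).
have Hev : \forall n \near \oo, (2 <= n)%N /\ (2 * 2 ^ (k n).+2 <= n)%N.
  have h1 := nbhs_infty_ge 2. have h2 := ln_ev (9 : R). have h3 := Hsq 1 ltr01. apply: (filterS3 _ _ h1 h2 h3) => n n2 l9 hq.
  split => //; apply: big_enough => //.
  have q0 : 0 < Num.sqrt (ln (n%:R : R)) by rewrite sqrtr_gt0; lra.
  by rewrite -[X in _ <= X]mul1r; apply: abs_from.
exists (fun n => Num.max 0 (r n - ln (((N n) ^ (k n).+1)%N%:R : R) / ln (n%:R : R))).
split.
  apply/cvgr0Pnorm_le => e e0'.
  set a := Num.min 1 (e / 4).
  have a0 : 0 < a by rewrite lt_min ltr01 /=; lra.
  have a1 : a <= 1 by rewrite ge_min lexx.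
  have a2 : a <= e / 4 by rewrite ge_min lexx orbT.
  apply: (filterS3 _ _ Hev (ln_ev (36 / e)) (Hsq a a0)) => n [n2 hD] l36 ha.
  have lpos : 0 < ln (n%:R : R) by apply: ln_gt0; rewrite ltr1n.
  have hb := delta_bound n2 erefl hD erefl.
  rewrite ger0_norm; last by rewrite le_max lexx.
  rewrite ge_max (ltW e0') /=.
  apply: (le_trans hb).
  set l := ln (n%:R : R) in lpos l36 ha hb *.
  set y := r n / Num.sqrt l in ha.
  have ql : Num.sqrt l ^+ 2 = l by rewrite sqr_sqrtr //; lra.
  have hy : (2 * r n ^+ 2 + 18) / l = 2 * y ^+ 2 + 18 / l.
    rewrite /y expr_div_n ql; field; lra.
  rewrite hy.
  have hy2 : y ^+ 2 <= a ^+ 2.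
    move: ha; rewrite ler_norml => /andP[h1 h2].
    rewrite !expr2; nra.
  have h18 : 18 / l <= e / 2.
    rewrite ler_pdivrMr //.
    have : 36 / e * e <= l * e by rewrite ler_wpM2r //; lra.
    rewrite mulfVK ?gt_eqF //; lra.
  have : a ^+ 2 <= e / 4 by rewrite expr2; nra.
  lra.
apply: (filterS _ Hev) => n [n2 hD].
exists #|{ffun 'I_(k n).+1 -> 'I_(N n)}|.
exists (fun i (j : 'I_n) => aeq rho s (enum_val i) j).
move=> S w sp.
have LNn : (size (Prog rho s (k n)) * N n <= n)%N.
  apply: leq_trans (_ : _ <= 2 ^ (k n).+2 * N n)%N _.
    by rewrite leq_mul2r size_Prog orbT.
  by rewrite mulnC leq_trunc_div.
have hS : #|S| = #|{ffun 'I_(k n).+1 -> 'I_(N n)}|.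
  apply: (all_in_S e1 _ sp) => i.
  exists (fun j : 'I_n => wit rho s (enum_val i) j) => j.
  by rewrite lin_eq_iso // (inj_eq enum_val_inj) eq_sym.
rewrite hS card_ffun !card_ord.
apply: fact_pow => //.
  by rewrite expn_gt0 divn_gt0 ?expn_gt0 //; lia.
set Y := ln _ / _.
have : r n - Y <= Num.max 0 (r n - Y) by rewrite le_max lexx orbT.
lra.
Qed.
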